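(* Let $f$ be an integer-valued function on the nonnegative integers such that $f(k)\ge 2 f(k-1) - 1$ for each $k\ge 1$ and $f(1)\ge 1$. If $M$ is a matroid with $\epsilon(M)\ge f(r(M))$ and $r(M)\ge 1$, then there is a round restriction $N$ of $M$ such that $\epsilon(N)\ge f(r(N))$ and $r(N)\ge 1$.
   Context: A matroid $M$ is round if $E(M)$ cannot be partitioned into two sets each of rank less than $r(M)$. A point is a rank-$1$ flat and $\epsilon(M)$ is the number of points of $M$. *)

(* Defs.v *)
From mathcomp Require Import all_boot all_order all_algebra.
Set Implicit Arguments. Unset Strict Implicit. Unset Printing Implicit Defensive.

Record matroid (T : finType) := Matroid {
  ground : {set T};
  indep : {set T} -> bool;
  indep_sub : forall I, indep I -> I \subset ground;
  indep0 : indep set0;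
  indep_subset : forall I J : {set T}, J \subset I -> indep I -> indep J;
  indep_aug : forall I J : {set T}, indep I -> indep J -> #|I| < #|J| ->
      exists2 e, e \in J :\: I & indep (e |: I)
}.

Section Matroid.
Variable T : finType.
Implicit Types (M : matroid T) (X A B F I J : {set T}).

Definition rk M A : nat := \max_(I : {set T} | (I \subset A) && indep M I) #|I|.

Definition mrank M : nat := rk M (ground M).

Definition flat M F : bool :=
  (F \subset ground M) &&
  [forall e in ground M :\: F, rk M F < rk M (e |: F)].

Definition point M F : bool := flat M F && (rk M F == 1).

Definition eps M : nat := #|[set F : {set T} | point M F]|.

Definition round M : Prop :=
  ~ exists A B, [/\ A :|: B = ground M, A :&: B = set0,
                   rk M A < mrank M & rk M B < mrank M].

Lemma restrict_sub M X I :
  indep M I && (I \subset X) -> I \subset X :&: ground M.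
Proof. by case/andP=> /indep_sub hI hX; rewrite subsetI hX hI. Qed.

Lemma restrict0 M X : indep M set0 && (set0 \subset X).
Proof. by rewrite indep0 sub0set. Qed.

Lemma restrict_subset M X I J : J \subset I ->
  indep M I && (I \subset X) -> indep M J && (J \subset X).
Proof.
move=> hJI /andP[hI hIX]; rewrite (indep_subset hJI hI) /=.
exact: subset_trans hJI hIX.
Qed.

Lemma restrict_aug M X I J : indep M I && (I \subset X) ->
  indep M J && (J \subset X) -> #|I| < #|J| ->
  exists2 e, e \in J :\: I & indep M (e |: I) && (e |: I \subset X).
Proof.
move=> /andP[hI hIX] /andP[hJ hJX] hlt.
have [e he hi] := indep_aug hI hJ hlt.
exists e => //; rewrite hi /= subUset hIX andbT sub1set.
by move: he; rewrite in_setD => /andP[_ /(subsetP hJX)].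
Qed.

Definition restrict M X : matroid T :=
  @Matroid T (X :&: ground M) (fun I => indep M I && (I \subset X))
    (@restrict_sub M X) (restrict0 M X) (@restrict_subset M X)
    (@restrict_aug M X).

End Matroid.

(* Main.v *)
Require Import Defs.
From mathcomp Require Import all_boot all_order all_algebra.
From mathcomp Require Import zify.
From Stdlib Require Import Classical.
Import GRing.Theory Num.Theory.

Set Implicit Arguments. Unset Strict Implicit.
Section Aux.
Variable T : finType.
Implicit Types (M N : matroid T).

Lemma rk_ge M (A I : {set T}) : I \subset A -> indep M I -> #|I| <= rk M A.
Proof.
move=> hIA hI; rewrite /rk.
have := @leq_bigmax_cond _ (fun J : {set T} => (J \subset A) && indep M J) (fun J : {set T} => #|J|) I.
by rewrite hIA hI => /(_ isT).
Qed.

Lemma rk_wit M (A : {set T}) : exists I : {set T}, [/\ I \subset A, indep M I & #|I| = rk M A].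
Proof.
have h0 : 0 < #|[pred I : {set T} | (I \subset A) && indep M I]|.
  apply/card_gt0P; exists set0; by rewrite inE sub0set indep0.
have [I hI heq] := eq_bigmax_cond (fun I : {set T} => #|I|) h0.
move: hI; rewrite inE => /andP[h1 h2]; exists I; split => //.
Qed.

Lemma rk_mono M (A B : {set T}) : A \subset B -> rk M A <= rk M B.
Proof.
move=> hAB; have [I [h1 h2 <-]] := rk_wit M A.
by apply: rk_ge => //; apply: subset_trans hAB.
Qed.

Lemma rk_restrict M (X Y : {set T}) : rk (restrict M X) Y = rk M (Y :&: X).
Proof.
rewrite /rk /=; apply: eq_bigl => I; rewrite subsetI.
by case: (I \subset Y); case: (I \subset X); case: (indep M I).
Qed.

Lemma nonloop M (Y : {set T}) : 0 < rk M Y -> exists x, x \in Y /\ indep M [set x].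
Proof.
have [I [h1 h2 h3]] := rk_wit M Y; rewrite -h3 => /card_gt0P [x hx].
exists x; split; first exact: (subsetP h1).
by apply: (indep_subset _ h2); rewrite sub1set.
Qed.

Lemma point_sub M (P : {set T}) : point M P -> P \subset ground M.
Proof. by case/andP=> /andP[]. Qed.

Lemma two_indep M (Q : {set T}) x e : point M Q -> x \in Q -> indep M [set x] ->
  e \in ground M -> e \notin Q -> indep M (e |: [set x]).
Proof.
move=> /andP[/andP[hQ /forallP hfl] /eqP hr] hx hix he heQ.
have := hfl e; rewrite in_setD heQ he /= hr => h2.
have [I [h1 h3 h4]] := rk_wit M (e |: Q).
have hlt : #|[set x]| < #|I| by rewrite cards1 h4.
have [z hz hiz] := indep_aug hix h3 hlt.
move: hz; rewrite in_setD in_set1 => /andP[hzx hzI].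
have := subsetP h1 z hzI; rewrite in_setU1 => /orP[/eqP hze|hzQ].
  by rewrite -hze.
exfalso.
have : #|z |: [set x]| <= rk M Q.
  apply: rk_ge hiz; by rewrite subUset !sub1set hzQ hx.
by rewrite hr cards2 hzx.
Qed.

Lemma point_incl M (P Q : {set T}) x : point M P -> point M Q -> x \in P -> x \in Q ->
  indep M [set x] -> P \subset Q.
Proof.
move=> hP hQ hxP hxQ hix; apply/subsetP => e heP.
apply/negPn/negP => heQ.
have hi := two_indep hQ hxQ hix (subsetP (point_sub hP) e heP) heQ.
have hex : e != x by apply/eqP => hh; move: heQ; rewrite hh hxQ.
have : #|e |: [set x]| <= rk M P.
  apply: rk_ge hi; by rewrite subUset !sub1set heP hxP.
by move: hP => /andP[_ /eqP ->]; rewrite cards2 hex.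
Qed.

Lemma point_restrict M (A P : {set T}) : point M P -> 0 < rk M (P :&: A) ->
  point (restrict M A) (P :&: A).
Proof.
move=> hP hpos.
have hrP : rk M P = 1 by move: hP => /andP[_ /eqP].
have hr1 : rk M (P :&: A) = 1.
  apply/eqP; rewrite eqn_leq hpos andbT -hrP; apply: rk_mono; exact: subsetIl.
have [x [hx hix]] := nonloop hpos.
move: (hx); rewrite in_setI => /andP[hxP hxA].
rewrite /point /flat /= rk_restrict -setIA setIid hr1 eqxx andbT.
apply/andP; split.
  rewrite subsetI subsetIr /=; apply: subset_trans (point_sub hP); exact: subsetIl.
apply/forallP => e; apply/implyP; rewrite !in_setD !in_setI => /andP[hn /andP[heA heE]].
rewrite rk_restrict.
have heP : e \notin P by move: hn; rewrite heA andbT.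
have hi := two_indep hP hxP hix heE heP.
have hex : e != x by apply/eqP => hh; move: heP; rewrite hh hxP.
apply: (leq_trans _ (rk_ge _ hi)); first by rewrite cards2 hex.
  rewrite subsetI !subUset !sub1set heA in_setU1 eqxx /=.
by rewrite !in_setU1 !in_setI hxP hxA !orbT.
Qed.

Lemma eps_split M (A B : {set T}) : A :|: B = ground M ->
  (eps M <= eps (restrict M A) + eps (restrict M B))%N.
Proof.
move=> hAB.
set S := [set F : {set T} | point M F].
set SA := [set F in S | 0 < rk M (F :&: A)].
set SB := [set F in S | 0 < rk M (F :&: B)].
have hcov : S \subset SA :|: SB.
  apply/subsetP => P; rewrite inE => hP.
  have hrP : 0 < rk M P by move: hP => /andP[_ /eqP ->].
  have [x [hx hix]] := nonloop hrP.
  have : x \in A :|: B by rewrite hAB; exact: (subsetP (point_sub hP)).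
  rewrite in_setU => /orP[hxA|hxB]; rewrite in_setU !inE hP /=; apply/orP.
    left; apply: leq_trans (rk_ge _ hix); first by rewrite cards1.
    by rewrite sub1set in_setI hx hxA.
  right; apply: leq_trans (rk_ge _ hix); first by rewrite cards1.
  by rewrite sub1set in_setI hx hxB.
have key : forall C, #|[set F in S | 0 < rk M (F :&: C)]| <= eps (restrict M C).
  move=> C; rewrite -(card_in_imset (f := fun F => F :&: C)).
    apply: subset_leq_card; apply/subsetP => G /imsetP [F].
    rewrite !inE => /andP[hF hpos] ->; exact: point_restrict.
  move=> P Q; rewrite !inE => /andP[hP hpP] /andP[hQ hpQ] heq.
  have [x [hx hix]] := nonloop hpP.
  have hxQ : x \in Q :&: C by rewrite -heq.
  move: hx hxQ; rewrite !in_setI => /andP[hxP _] /andP[hxQ _].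
  by apply/eqP; rewrite eqEsubset !(point_incl _ _ _ _ hix).
rewrite /eps -/S.
apply: leq_trans (subset_leq_card hcov) _.
apply: leq_trans (leq_card_setU _ _) _.
exact: leq_add (key A) (key B).
Qed.

Lemma eps0 N : mrank N = 0 -> eps N = 0.
Proof.
move=> h0; apply/eqP; rewrite cards_eq0; apply/eqP/setP => F.
rewrite inE in_set0; apply/negP => /andP[/andP[hs _] /eqP r1].
by have := rk_mono N hs; rewrite r1 -/(mrank N) h0.
Qed.

Definition same N M := ground N = ground M /\
  forall Y : {set T}, Y \subset ground M -> rk N Y = rk M Y.

Lemma same_sym N M : same N M -> same M N.
Proof. by move=> [hg hr]; split => // Y; rewrite hg => hY; rewrite hr. Qed.

Lemma same_mrank N M : same N M -> mrank N = mrank M.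
Proof. by move=> [hg hr]; rewrite /mrank hg hr. Qed.

Lemma same_point N M F : same N M -> point N F = point M F.
Proof.
move=> [hg hr]; rewrite /point /flat hg.
case: (boolP (F \subset ground M)) => //= hF; rewrite hr //.
congr (_ && _); apply: eq_forallb => e.
case he: (e \in ground M :\: F) => //=.
rewrite hr //; move: he; rewrite in_setD => /andP[_ he].
by rewrite subUset sub1set he.
Qed.

Lemma same_eps N M : same N M -> eps N = eps M.
Proof.
move=> hs; rewrite /eps; apply: eq_card => F; rewrite !inE.
exact: same_point.
Qed.

Lemma same_round N M : same N M -> round M -> round N.
Proof.
move=> hs hM [A [B [h1 h2 h3 h4]]]; apply: hM; exists A, B.
have [hg hr] := hs.
have hA : A \subset ground M by rewrite -hg -h1 subsetUl.
have hB : B \subset ground M by rewrite -hg -h1 subsetUr.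
by split; rewrite -?hg // -?(hr _ hA) -?(hr _ hB) -?(same_mrank hs).
Qed.

Lemma same_restrict_ground M : same (restrict M (ground M)) M.
Proof.
split; first by rewrite /= setIid.
by move=> Y hY; rewrite rk_restrict (setIidPl hY).
Qed.

Lemma same_restrict2 M (A X : {set T}) : X \subset A ->
  same (restrict (restrict M A) X) (restrict M X).
Proof.
move=> hXA; split.
  by rewrite /= setIA (setIidPl hXA).
by move=> Y _; rewrite !rk_restrict -setIA (setIidPl hXA).
Qed.

Lemma mrank_restrict M (A : {set T}) : A \subset ground M -> mrank (restrict M A) = rk M A.
Proof.
by move=> hA; rewrite /mrank rk_restrict /= setIAC setIid (setIidPl hA).
Qed.

End Aux.
Unset Implicit Arguments. Set Strict Implicit.

Local Open Scope ring_scope.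

Theorem lemma2p4 (f : nat -> int)
  (hf : forall k : nat, (1 <= k)%N -> 2 * f k.-1 - 1 <= f k)
  (hf1 : 1 <= f 1%N)
  (T : finType) (M : matroid T)
  (hM : f (mrank M) <= (eps M)%:Z) (hr : (1 <= mrank M)%N) :
  exists X : {set T}, [/\ X \subset ground M,
    round (restrict M X),
    f (mrank (restrict M X)) <= (eps (restrict M X))%:Z &
    (1 <= mrank (restrict M X))%N].
Proof.
have fpos : forall k, (1 <= k)%N -> 1 <= f k.
  elim => [//|k IH] _; case: k IH => [|k] IH //.
  have := hf k.+2 isT; have := IH isT => /=. lia.
have fstep : forall k, f k <= f k.+1.
  move=> k; have := hf k.+1 isT => /=; case: k => [|k] h.
    lia.
  have := fpos k.+1 isT; lia.
have fmono : forall m n, (m <= n)%N -> f m <= f n.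
  move=> m; elim => [|n IH]; first by rewrite leqn0 => /eqP ->.
  rewrite leq_eqVlt => /orP[/eqP ->//|hmn].
  exact: Order.le_trans (IH hmn) (fstep n).
suff main : forall n (M : matroid T), (mrank M <= n)%N ->
  f (mrank M) <= (eps M)%:Z -> (1 <= mrank M)%N ->
  exists X : {set T}, [/\ X \subset ground M,
    round (restrict M X),
    f (mrank (restrict M X)) <= (eps (restrict M X))%:Z &
    (1 <= mrank (restrict M X))%N].
  exact: main (leqnn _) hM hr.
elim => [|n IH] N hn hfN hrN; first by move: hn hrN; rewrite leqn0 => /eqP ->.
case: (classic (round N)) => hround.
  have hs := same_restrict_ground N.
  exists (ground N); split => //.
  - exact: (same_round hs).
  - by rewrite (same_mrank hs) (same_eps hs).
  - by rewrite (same_mrank hs).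
have [A [B [hAB hI hA hB]]] : exists A B, [/\ A :|: B = ground N, A :&: B = set0,
    (rk N A < mrank N)%N & (rk N B < mrank N)%N].
  by apply: NNPP.
have hAs : A \subset ground N by rewrite -hAB subsetUl.
have hBs : B \subset ground N by rewrite -hAB subsetUr.
have rec : forall C : {set T}, C \subset ground N -> (rk N C < mrank N)%N ->
    f (mrank (restrict N C)) <= (eps (restrict N C))%:Z ->
    (1 <= mrank (restrict N C))%N ->
  exists X : {set T}, [/\ X \subset ground N,
    round (restrict N X),
    f (mrank (restrict N X)) <= (eps (restrict N X))%:Z &
    (1 <= mrank (restrict N X))%N].
  move=> C hC hlt h1 h2.
  have hle : (mrank (restrict N C) <= n)%N.
    by rewrite mrank_restrict //; rewrite -ltnS; apply: leq_trans hlt hn.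
  have [X [hX1 hX2 hX3 hX4]] := IH _ hle h1 h2.
  have hXC : X \subset C by apply: subset_trans hX1 _; exact: subsetIl.
  have hs := same_restrict2 N hXC.
  exists X; split.
  - apply: subset_trans hX1 _; exact: subsetIr.
  - exact: (same_round (same_sym hs)).
  - by rewrite -(same_mrank hs) -(same_eps hs).
  - by rewrite -(same_mrank hs).
case: (boolP ((f (mrank (restrict N A)) <= (eps (restrict N A))%:Z) && (1 <= mrank (restrict N A))%N)).
  by case/andP => h1 h2; exact: (rec A hAs hA h1 h2).
move=> nA; case: (boolP ((f (mrank (restrict N B)) <= (eps (restrict N B))%:Z) && (1 <= mrank (restrict N B))%N)).
  by case/andP => h1 h2; exact: (rec B hBs hB h1 h2).
move=> nB; exfalso.
have bnd : forall C : {set T}, C \subset ground N -> (rk N C < mrank N)%N ->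
    ~~ ((f (mrank (restrict N C)) <= (eps (restrict N C))%:Z) && (1 <= mrank (restrict N C))%N) ->
    ((eps (restrict N C) = 0%N) \/ ((eps (restrict N C))%:Z <= f (mrank N).-1 - 1)).
  move=> C hC hlt; rewrite mrank_restrict //.
  case: (posnP (rk N C)) => h0.
    by move=> _; left; apply: eps0; rewrite mrank_restrict.
  rewrite ?h0 andbT => hl; right.
  have : f (rk N C) <= f (mrank N).-1.
    by apply: fmono; rewrite -ltnS prednK // (leq_trans h0 hlt).
  lia.
have bA := bnd A hAs hA nA.
have bB := bnd B hBs hB nB.
have hsp := eps_split hAB.
have h1 := fpos _ hrN.
have h2 := hf _ hrN.
have h3 := fmono _ _ (leq_pred (mrank N)).
move: hfN hsp bA bB h1 h2 h3.
set a := eps (restrict N A); set b := eps (restrict N B); set e := eps N.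
set g := f (mrank N).-1; set h := f (mrank N).
lia.
Qed.
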